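(* Let $IS\in\{\Box,\blacksquare\}^2$. There is no correct compositional translation from $\mathrm{SYNCSIMPLE}$ into $\mathrm{LOCKSIMPLE}_{2,IS}$ of blocking type $(P_1,P_2)$.
   Context: $\mathrm{SYNCSIMPLE}$: subprocesses $\mathcal{U} ::= \checkmark \mid 0 \mid\, !\mathcal{U} \mid\, ?\mathcal{U}$; processes are finite parallel compositions ($\mid$ associative, commutative, $0$ a unit). Reduction: $!\mathcal{U}_1\mid ?\mathcal{U}_2\mid \mathcal{P}\to \mathcal{U}_1\mid\mathcal{U}_2\mid\mathcal{P}$. Successful: of form $\checkmark\mid\mathcal{P}$; may-convergent: reduces to a successful process; must-convergent: every reachable process is may-convergent. $\mathrm{LOCKSIMPLE}_{k,IS}$ ($IS\in\{\Box,\blacksquare\}^k$, $\Box$ empty, $\blacksquare$ full): subprocesses are words over $\{P_1,T_1,\dots,P_k,T_k\}$ followed by $0$ or $\checkmark$; states $(\mathcal{P},C)$ reduce by $(P_i\mathcal{U}\mid\mathcal{P},C)\to(\mathcal{U}\mid\mathcal{P},C[C_i:=\blacksquare])$ only if $C_i=\Box$, and $(T_i\mathcal{U}\mid\mathcal{P},C)\to(\mathcal{U}\mid\mathcal{P},C[C_i:=\Box])$ always. Success = process contains $\checkmark$; a process $\mathcal{P}$ is may/must-convergent iff the state $(\mathcal{P},IS)$ is. A compositional translation $\tau$ is given by words $\tau(!),\tau(?)$ with $\tau(0)=0$, $\tau(\checkmark)=\checkmark$, $\tau(!\mathcal{U})=\tau(!)\tau(\mathcal{U})$, $\tau(?\mathcal{U})=\tau(?)\tau(\mathcal{U})$,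 $\tau$ commuting with $\mid$; correct = preserves and reflects may- and must-convergence. Blocking type: for a word $S$, run $S$ as a single subprocess from $IS$; if it gets stuck at an occurrence of $P_i$ which is the first symbol from $\{P_i,T_i\}$ in $S$, the blocking type of $S$ is $P_i$; if it gets stuck at a later occurrence of $P_i$ the type is $P_iP_i$. $\tau$ has blocking type $(W_1,W_2)$ if $\tau(!)$ has type $W_1$ and $\tau(?)$ type $W_2$. *)

(* Defs.v *)
From Stdlib Require Import List Permutation.
From mathcomp Require Import all_boot.
Set Implicit Arguments. Unset Strict Implicit. Unset Printing Implicit Defensive.

Inductive ssub : Type :=
| STick : ssub
| SZero : ssub
| SBang : ssub -> ssub
| SQuest : ssub -> ssub.

(* A process is a finite parallel composition, represented by a list;
   | is associative/commutative with unit 0 (= empty list up to 0's):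
   reduction is taken up to permutation. *)
Definition sproc := list ssub.

Definition sstep (p q : sproc) : Prop :=
  exists (u1 u2 : ssub) (r : sproc),
    Permutation p (SBang u1 :: SQuest u2 :: r) /\ q = u1 :: u2 :: r.

Definition sreach : sproc -> sproc -> Prop := Relation_Operators.clos_refl_trans _ sstep.

Definition ssuccessful (p : sproc) : Prop := In STick p.

Definition smay (p : sproc) : Prop := exists q, sreach p q /\ ssuccessful q.
Definition smust (p : sproc) : Prop := forall q, sreach p q -> smay q.

Inductive lsym (k : nat) : Type :=
| LP : 'I_k -> lsym k
| LT : 'I_k -> lsym k.

Definition lsym_idx k (s : lsym k) : 'I_k := match s with LP i => i | LT i => i end.

Inductive lend : Type := LZero | LTick.

Definition lsub k := (list (lsym k) * lend)%type.
Definition lproc k := list (lsub k).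

(* lock configuration: true = full (black square), false = empty (white square) *)
Definition locks k := 'I_k -> bool.

Definition lupd k (C : locks k) (i : 'I_k) (b : bool) : locks k :=
  fun j => if j == i then b else C j.

Definition lstep k (s s' : lproc k * locks k) : Prop :=
  (exists i w e r, Permutation s.1 ((LP i :: w, e) :: r) /\ s.2 i = false /\
      s' = ((w, e) :: r, lupd s.2 i true)) \/
  (exists i w e r, Permutation s.1 ((LT i :: w, e) :: r) /\
      s' = ((w, e) :: r, lupd s.2 i false)).

Definition lreach k : lproc k * locks k -> lproc k * locks k -> Prop :=
  Relation_Operators.clos_refl_trans _ (@lstep k).

Definition lsuccessful k (s : lproc k * locks k) : Prop := In (nil, LTick) s.1.

Definition lmay_state k (s : lproc k * locks k) : Prop :=
  exists s', lreach s s' /\ lsuccessful s'.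
Definition lmust_state k (s : lproc k * locks k) : Prop :=
  forall s', lreach s s' -> lmay_state s'.

Definition lmay k (IS : locks k) (p : lproc k) : Prop := lmay_state (p, IS).
Definition lmust k (IS : locks k) (p : lproc k) : Prop := lmust_state (p, IS).

Fixpoint tau_sub k (wb wq : list (lsym k)) (u : ssub) : lsub k :=
  match u with
  | STick => (nil, LTick)
  | SZero => (nil, LZero)
  | SBang u' => let t := tau_sub wb wq u' in (wb ++ t.1, t.2)
  | SQuest u' => let t := tau_sub wb wq u' in (wq ++ t.1, t.2)
  end.

Definition tau k (wb wq : list (lsym k)) (p : sproc) : lproc k :=
  map (tau_sub wb wq) p.

Definition correct_translation k (IS : locks k) (wb wq : list (lsym k)) : Prop :=
  forall p : sproc,
    (smay p <-> lmay IS (tau wb wq p)) /\ (smust p <-> lmust IS (tau wb wq p)).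

(* Running a word as a single subprocess from lock state C: returns
   Some pre if execution gets stuck right after the prefix pre (at a P_j with
   C_j full), None if the whole word can be executed. *)
Fixpoint stuck_prefix k (S : list (lsym k)) (C : locks k) : option (list (lsym k)) :=
  match S with
  | nil => None
  | LP i :: S' => if C i then Some nil
                  else omap (cons (LP i)) (stuck_prefix S' (lupd C i true))
  | LT i :: S' => omap (cons (LT i)) (stuck_prefix S' (lupd C i false))
  end.

Definition blocking_type_P k (IS : locks k) (S : list (lsym k)) (i : 'I_k) : Prop :=
  exists pre post,
    stuck_prefix S IS = Some pre /\ S = pre ++ LP i :: post /\
    (forall s, In s pre -> lsym_idx s <> i).

Definition lock1 : 'I_2 := @Ordinal 2 0 isT.
Definition lock2 : 'I_2 := @Ordinal 2 1 isT.

(* Main.v *)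
Require Import Defs.
From Stdlib Require Import List Permutation.
From mathcomp Require Import all_boot.
From Stdlib Require Import FunctionalExtensionality Relations.
Set Implicit Arguments. Unset Strict Implicit. Unset Printing Implicit Defensive.


Definition full2 : locks 2 := fun _ => true.

Inductive srun : list (lsym 2) -> locks 2 -> list (lsym 2) -> locks 2 -> Prop :=
| srun_refl w C : srun w C w C
| srun_P i w C w' C' : C i = false -> srun w (lupd C i true) w' C' -> srun (LP i :: w) C w' C'
| srun_T i w C w' C' : srun w (lupd C i false) w' C' -> srun (LT i :: w) C w' C'.

Lemma lupd_idem (C : locks 2) k b b' : lupd (lupd C k b) k b' = lupd C k b'.
Proof. apply functional_extensionality => l; rewrite /lupd; by case: (l == k). Qed.

Lemma lupd_comm (C : locks 2) k l b b' : k != l -> lupd (lupd C k b) l b' = lupd (lupd C l b') k b.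
Proof.
move=> nkl; apply functional_extensionality => m; rewrite /lupd.
case: eqP => [Eml|Nml]; case: eqP => [Emk|Nmk] //.
by move: nkl; rewrite -Emk -Eml eqxx.
Qed.

Lemma lupd_same (C : locks 2) k b : C k = b -> lupd C k b = C.
Proof. move=> H; apply functional_extensionality => l; rewrite /lupd.
by case: (eqVneq l k) => [->|]. Qed.

Lemma lupd_at (C : locks 2) k b : lupd C k b k = b.
Proof. by rewrite /lupd eqxx. Qed.

Lemma lupd_other (C : locks 2) k l b : l != k -> lupd C k b l = C l.
Proof. by rewrite /lupd => /negbTE ->. Qed.

Lemma ord2_cases (i j k : 'I_2) : i != j -> k = i \/ k = j.
Proof.
move: i j k => [[|[|i']] Hi] [[|[|j']] Hj] [[|[|k']] Hk] //= Hij;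
  try (by left; apply: val_inj); try (by right; apply: val_inj).
Qed.

Lemma locks2_ext (i j : 'I_2) (C D : locks 2) : i != j -> C i = D i -> C j = D j -> C = D.
Proof. move=> ij Hi Hj; apply functional_extensionality => k.
by case: (ord2_cases k ij) => ->. Qed.

Lemma srun_trans w C w1 C1 w2 C2 : srun w C w1 C1 -> srun w1 C1 w2 C2 -> srun w C w2 C2.
Proof. elim=> [//|i v D v' D' HD _ IH|i v D v' D' _ IH] H2.
- by apply: srun_P => //; apply: IH.
- by apply: srun_T; apply: IH.
Qed.

Lemma srun_app w C w' C' z : srun w C w' C' -> srun (w ++ z) C (w' ++ z) C'.
Proof. elim=> [v D|i v D v' D' HD _ IH|i v D v' D' _ IH] /=.
- exact: srun_refl.
- exact: srun_P.
- exact: srun_T.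
Qed.

Lemma srun_len w C w' C' : srun w C w' C' -> (size w' <= size w)%N.
Proof. elim=> [//|i v D v' D' _ _ IH|i v D v' D' _ IH] /=; exact: leqW. Qed.

Lemma srun_keep w C w' C' k : srun w C w' C' -> (forall s, In s w -> lsym_idx s <> k) -> C' k = C k.
Proof. elim=> [//|i v D v' D' HD _ IH|i v D v' D' _ IH] Hn.
- rewrite IH; last by move=> s Hs; apply: Hn; right.
  apply: lupd_other; apply/eqP => E; apply: (Hn (LP i)); [by left|by rewrite E].
- rewrite IH; last by move=> s Hs; apply: Hn; right.
  apply: lupd_other; apply/eqP => E; apply: (Hn (LT i)); [by left|by rewrite E].
Qed.

Lemma srun_frame w C w' C' k : srun w C w' C' -> (forall s, In s w -> lsym_idx s <> k) ->
  forall bb, srun w (lupd C k bb) w' (lupd C' k bb).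
Proof. elim=> [v D|i v D v' D' HD _ IH|i v D v' D' _ IH] Hn bb.
- exact: srun_refl.
- have ik : i != k by apply/eqP => E; apply: (Hn (LP i)); [by left|by rewrite E].
  apply: srun_P; first by rewrite lupd_other.
  rewrite lupd_comm; last by rewrite eq_sym.
  by apply: IH => s Hs; apply: Hn; right.
- have ik : i != k by apply/eqP => E; apply: (Hn (LT i)); [by left|by rewrite E].
  apply: srun_T. rewrite lupd_comm; last by rewrite eq_sym.
  by apply: IH => s Hs; apply: Hn; right.
Qed.

Lemma srun_mono w C w' C' k : srun w C w' C' -> C k = true ->
  srun w (lupd C k false) w' C' \/ (C' k = true /\ srun w (lupd C k false) w' (lupd C' k false)).
Proof.
elim=> [v D|i v D v' D' HD _ IH|i v D v' D' Hr IH] Hk.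
- by right; split => //; apply: srun_refl.
- have ik : i != k by apply/eqP => E; move: HD; rewrite E Hk.
  have Hk' : lupd D i true k = true by rewrite lupd_other // eq_sym.
  case: (IH Hk') => [H|[H1 H]].
  + left; apply: srun_P; first by rewrite lupd_other.
    rewrite lupd_comm; [exact: H|by rewrite eq_sym].
  + right; split => //; apply: srun_P; first by rewrite lupd_other.
    rewrite lupd_comm; [exact: H|by rewrite eq_sym].
- case: (eqVneq i k) => [ik|ik].
  + subst i; left; apply: srun_T; by rewrite lupd_idem.
  + have Hk' : lupd D i false k = true by rewrite lupd_other // eq_sym.
    case: (IH Hk') => [H|[H1 H]].
    * left; apply: srun_T; rewrite lupd_comm; [exact: H|by rewrite eq_sym].
    * right; split => //; apply: srun_T; rewrite lupd_comm; [exact: H|by rewrite eq_sym].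
Qed.

Lemma srun_outcome w C : (exists C', srun w C [::] C') \/
  (exists k w' C', srun w C (LP k :: w') C' /\ C' k = true).
Proof.
elim: w C => [|[i|i] w IH] C.
- by left; exists C; apply: srun_refl.
- case HC: (C i).
  + by right; exists i, w, C; split => //; apply: srun_refl.
  + case: (IH (lupd C i true)) => [[C' H]|[k [w' [C' [H1 H2]]]]].
    * by left; exists C'; apply: srun_P.
    * by right; exists k, w', C'; split => //; apply: srun_P.
- case: (IH (lupd C i false)) => [[C' H]|[k [w' [C' [H1 H2]]]]].
  * by left; exists C'; apply: srun_T.
  * by right; exists k, w', C'; split => //; apply: srun_T.
Qed.

Lemma srun_LP_inv k w C C' : srun (LP k :: w) C [::] C' -> C k = false /\ srun w (lupd C k true) [::] C'.
Proof. move=> H; inversion H; subst; by split. Qed.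


Definition reachP (s : lproc 2 * locks 2) (P : lproc 2) (C : locks 2) :=
  exists P', Permutation P' P /\ lreach s (P', C).

Lemma lstep_perm P Q C s' : Permutation P Q -> @lstep 2 (P, C) s' -> @lstep 2 (Q, C) s'.
Proof.
move=> HPQ [[i [w [e [r [H1 H2]]]]]|[i [w [e [r [H1 H2]]]]]].
- left; exists i, w, e, r; split => //; exact: Permutation_trans (Permutation_sym HPQ) H1.
- right; exists i, w, e, r; split => //; exact: Permutation_trans (Permutation_sym HPQ) H1.
Qed.

Lemma lreach_perm (s s' : lproc 2 * locks 2) : lreach s s' -> forall Q, Permutation s.1 Q ->
  exists Q', Permutation s'.1 Q' /\ lreach (Q, s.2) (Q', s'.2).
Proof.
move=> H0; have H := clos_rt_rt1n _ _ _ _ H0; clear H0.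
elim: H => [x|x y z Hxy Hyz IH] Q HQ.
- by exists Q; split => //; apply: rt_refl.
- exists z.1; split => //.
  have Hs : @lstep 2 (Q, x.2) y by case: x Hxy HQ {IH} => P C /= Hxy HQ; apply: lstep_perm HQ Hxy.
  apply: rt_trans; first by apply: rt_step; exact: Hs.
  by case: z Hyz {IH} => zP zC Hyz; apply: clos_rt1n_rt.
Qed.

Lemma reachP_refl P C : reachP (P, C) P C.
Proof. by exists P; split => //; apply: rt_refl. Qed.

Lemma reachP_perm s P Q C : reachP s P C -> Permutation P Q -> reachP s Q C.
Proof. move=> [P' [H1 H2]] HPQ; exists P'; split => //; exact: Permutation_trans H1 HPQ. Qed.

Lemma reachP_trans s P C Q D : reachP s P C -> reachP (P, C) Q D -> reachP s Q D.
Proof.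
move=> [P' [H1 H2]] [Q' [H3 H4]].
have [Q'' [H5 H6]] := lreach_perm H4 (Permutation_sym H1).
exists Q''; split; first exact: Permutation_trans (Permutation_sym H5) H3.
exact: rt_trans H2 H6.
Qed.

Lemma reachP_srun0 w C w' C' : srun w C w' C' -> forall e J, reachP ((w, e) :: J, C) ((w', e) :: J) C'.
Proof.
elim=> [v D|i v D v' D' HD _ IH|i v D v' D' _ IH] e J.
- exact: reachP_refl.
- apply: reachP_trans (IH e J); exists ((v, e) :: J); split => //.
  apply: rt_step; left; exists i, v, e, J; split => //.
- apply: reachP_trans (IH e J); exists ((v, e) :: J); split => //.
  apply: rt_step; right; exists i, v, e, J; split => //.
Qed.

Lemma reachP_srun s w e J C w' C' : reachP s ((w, e) :: J) C -> srun w C w' C' -> reachP s ((w', e) :: J) C'.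
Proof. move=> H1 H2; exact: reachP_trans H1 (reachP_srun0 H2 e J). Qed.

Lemma reachP_srun2 s c w e C w' C' : reachP s [:: c; (w, e)] C -> srun w C w' C' -> reachP s [:: c; (w', e)] C'.
Proof.
move=> H1 H2.
have H3 : reachP s [:: (w, e); c] C by apply: reachP_perm H1 (perm_swap _ _ _).
apply: reachP_perm (reachP_srun H3 H2) (perm_swap _ _ _).
Qed.

Definition blocked (C : locks 2) (c : lsub 2) : Prop :=
  c.1 = [::] \/ exists k w', c.1 = LP k :: w' /\ C k = true.

Lemma nostep P C : (forall c, In c P -> blocked C c) -> forall t, ~ @lstep 2 (P, C) t.
Proof.
move=> HB t [[i [w [e [r [H1 [H2 _]]]]]]|[i [w [e [r [H1 _]]]]]] /=.
- have := HB _ (Permutation_in _ (Permutation_sym H1) (in_eq _ _)).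
  move=> [//|[k [w' [E Hk]]]]; case: E => Eik _.
  by move: H2; rewrite /= Eik Hk.
- have := HB _ (Permutation_in _ (Permutation_sym H1) (in_eq _ _)).
  by move=> [//|[k [w' [E _]]]].
Qed.

Lemma lreach_stuck (s s' : lproc 2 * locks 2) : lreach s s' -> (forall t, ~ @lstep 2 s t) -> s' = s.
Proof.
move=> H0; have H := clos_rt_rt1n _ _ _ _ H0; clear H0.
case: H => [|y z Hxy _] Hn //.
by case: (Hn _ Hxy).
Qed.

Lemma dead_contra s P C : lmust_state s -> reachP s P C ->
  (forall c, In c P -> blocked C c) -> ~ In ([::], LTick) P -> False.
Proof.
move=> Hm [P' [HP Hr]] HB Hn.
have [s' [Hr' Hs']] := Hm _ Hr.
have HB' : forall c, In c P' -> blocked C c.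
  by move=> c Hc; apply: HB; apply: Permutation_in HP Hc.
rewrite (lreach_stuck Hr' (nostep HB')) /lsuccessful /= in Hs'.
by apply: Hn; apply: Permutation_in HP Hs'.
Qed.

Lemma may_of s P C : reachP s P C -> In ([::], LTick) P -> lmay_state s.
Proof.
move=> [P' [HP Hr]] Hi; exists (P', C); split => //.
by rewrite /lsuccessful /=; apply: Permutation_in (Permutation_sym HP) Hi.
Qed.


Lemma blockedN C e : blocked C ([::], e).
Proof. by left. Qed.
Lemma blockedP C k w e : C k = true -> blocked C (LP k :: w, e).
Proof. by move=> H; right; exists k, w. Qed.
Lemma blocked2 C c1 c2 : blocked C c1 -> blocked C c2 -> forall c, In c [:: c1; c2] -> blocked C c.
Proof. by move=> H1 H2 c [<-|[<-|[]]]. Qed.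
Lemma notin2 c1 c2 : c1 <> ([::] : list (lsym 2), LTick) -> c2 <> ([::] : list (lsym 2), LTick) -> ~ In ([::] : list (lsym 2), LTick) [:: c1; c2].
Proof. by move=> H1 H2 [E|[E|[]]]; [exact: H1 E|exact: H2 E]. Qed.

Lemma xfact_ext (i j : 'I_2) x w (Ca M D : locks 2) : i != j ->
  srun x Ca w M -> Ca i = true -> M j = false ->
  D i = true -> (D j = Ca j \/ D j = false) -> srun x D w M.
Proof.
move=> ij HX Hi Hj Di [Dj|Dj].
- have -> : D = Ca by apply: (locks2_ext ij); [by rewrite Di Hi|exact: Dj].
  exact: HX.
- case HCj: (Ca j).
  + have -> : D = lupd Ca j false.
      apply: (locks2_ext ij); first by rewrite lupd_other // Di Hi.
      by rewrite lupd_at.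
    by case: (srun_mono HX HCj) => [//|[]]; rewrite Hj.
  + have -> : D = Ca by apply: (locks2_ext ij); [by rewrite Di Hi|by rewrite Dj HCj].
    exact: HX.
Qed.



Lemma generic (i j : 'I_2) (a x b y : list (lsym 2)) (Ca Cb : locks 2) :
  i != j ->
  (forall s, In s a -> lsym_idx s <> i) ->
  (forall s, In s b -> lsym_idx s <> j) ->
  srun a full2 [::] Ca -> srun b full2 [::] Cb -> Cb i = false ->
  lmust_state ([:: ((a ++ LP i :: x) ++ [::], LTick); ((b ++ LP j :: y) ++ [::], LZero)], full2) ->
  lmust_state ([:: ((a ++ LP i :: x) ++ [::], LZero); ((b ++ LP j :: y) ++ [::], LTick)], full2) ->
  ~ lmay_state ([:: ((a ++ LP i :: x) ++ ((b ++ LP j :: y) ++ [::]), LTick); ((b ++ LP j :: y) ++ [::], LZero)], full2) ->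
  lmust_state ([:: ((a ++ LP i :: x) ++ [::], LTick); ((b ++ LP j :: y) ++ ((a ++ LP i :: x) ++ [::]), LZero)], full2) ->
  lmust_state ([:: ((a ++ LP i :: x) ++ ((b ++ LP j :: y) ++ [::]), LTick); ((b ++ LP j :: y) ++ ((a ++ LP i :: x) ++ [::]), LZero)], full2) ->
  False.
Proof.
move=> ij Hai Hbj Ha Hb Cbi H1 H2 H3 H4 H5.
set U1 := a ++ LP i :: x. set U2 := b ++ LP j :: y.
pose init (cA cB : list (lsym 2)) (eA eB : lend) : (lproc 2 * locks 2)%type := ([:: (U1 ++ cA, eA); (U2 ++ cB, eB)], full2).
have ji : j != i by rewrite eq_sym.
have Cai : Ca i = true by rewrite (srun_keep Ha Hai).
have Cbj : Cb j = true by rewrite (srun_keep Hb Hbj).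
have HCb : Cb = lupd full2 i false.
  by apply: (locks2_ext ij); [rewrite lupd_at|rewrite lupd_other].
have b_any : forall L, srun b L [::] (lupd L i false).
  move=> L; case HLi: (L i).
  - have EL : L = lupd full2 j (L j).
      by apply: (locks2_ext ij); [rewrite lupd_other|rewrite lupd_at].
    have := srun_frame Hb Hbj (L j); rewrite -EL.
    have -> : lupd Cb j (L j) = lupd L i false.
      by apply: (locks2_ext ij); rewrite ?lupd_at ?lupd_other // Cbi.
    by [].
  - have EL' : lupd L i true i = true by rewrite lupd_at.
    have HL' : srun b (lupd L i true) [::] (lupd (lupd L i true) i false).
      have EL : lupd L i true = lupd full2 j (L j).
        by apply: (locks2_ext ij); rewrite ?lupd_at ?lupd_other.
      have := srun_frame Hb Hbj (L j); rewrite -EL.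
      have -> : lupd Cb j (L j) = lupd (lupd L i true) i false.
        by apply: (locks2_ext ij); rewrite ?lupd_at ?lupd_other // Cbi.
      by [].
    rewrite lupd_idem in HL'.
    case: (srun_mono HL' EL') => [H|[Hf _]]; last by rewrite lupd_at in Hf.
    by rewrite lupd_idem {1}(lupd_same HLi) in H.
have canon : forall cA cB eA eB, reachP (init cA cB eA eB) [:: (x ++ cA, eA); (LP j :: y ++ cB, eB)] Ca.
  move=> cA cB eA eB.
  have HB : srun (U2 ++ cB) full2 (LP j :: y ++ cB) Cb.
    by rewrite /U2 -catA; apply: (srun_app (LP j :: y ++ cB) Hb).
  have R0 := reachP_srun2 (reachP_refl [:: (U1 ++ cA, eA); (U2 ++ cB, eB)] full2) HB.
  have HA : srun (U1 ++ cA) Cb (x ++ cA) Ca.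
    rewrite /U1 -catA; apply: srun_trans (srun_app (LP i :: x ++ cA) _) _.
      by rewrite HCb; apply: (srun_frame Ha Hai false).
    apply: srun_P; first by rewrite lupd_at.
    by rewrite lupd_idem lupd_same //; apply: srun_refl.
  exact: (reachP_srun R0 HA).

case: (srun_outcome x Ca) => [[L3 HxL3]|[k [x' [M [HxM HMk]]]]].
- (* A completes without B crossing: self-synchronisation *)
  have R1 : forall cA cB eA eB, reachP (init cA cB eA eB) [:: (cA, eA); (LP j :: y ++ cB, eB)] L3.
    by move=> cA cB eA eB; apply: (reachP_srun (canon cA cB eA eB) (srun_app cA HxL3)).
  case: (srun_outcome (LP j :: y) L3) => [[L4 HyL4]|[k [y' [N [HyN HNk]]]]].
  + have [L3j Hy4] := srun_LP_inv HyL4.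
    apply: H3.
    have R := R1 (U2 ++ [::]) [::] LTick LZero.
    have [C5 HyC5] : exists C5, srun y (lupd (lupd L3 i false) j true) [::] C5.
      case HL3i: (L3 i).
      - have E3 : lupd L3 j true i = true by rewrite lupd_other.
        case: (srun_mono Hy4 E3) => [H|[_ H]]; rewrite lupd_comm // in H; by eexists; exact: H.
      - by rewrite (lupd_same HL3i); exists L4.
    have HA : srun (U2 ++ [::]) L3 [::] C5.
      rewrite cats0 /U2; apply: srun_trans (srun_app (LP j :: y) (b_any L3)) _.
      apply: srun_P; first by rewrite lupd_other.
      exact: HyC5.
    by apply: (may_of (reachP_srun R HA)); left.
  + apply: (dead_contra H2 (reachP_srun2 (R1 [::] [::] LZero LTick) (srun_app [::] HyN))).
    * by apply: blocked2; [exact: blockedN|exact: blockedP].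
    * by apply: notin2 => E; inversion E.
- case HMj: (M j).
  + apply: (dead_contra H1 (reachP_srun (canon [::] [::] LTick LZero) (srun_app [::] HxM))).
    * by apply: blocked2; apply: blockedP.
    * by apply: notin2 => E; inversion E.
  + have Eki : k = i.
      by case: (ord2_cases k ij) => // Ekj; move: HMk; rewrite Ekj HMj.
    subst k.
    have HMfull : lupd M j true = full2.
      by apply: (locks2_ext ij); rewrite ?lupd_at ?lupd_other.
    have steal : forall L, L i = false -> srun (U1 ++ [::]) L (LP i :: x' ++ [::]) M.
      move=> L HLi; rewrite /U1 -catA.
      have [D [HaD [Di Dj]]] : exists D, srun a L [::] D /\ D i = false /\ (D j = Ca j \/ D j = false).
        have Hf := srun_frame Ha Hai false.
        case HLj: (L j).
        - have EL : L = lupd full2 i false.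
            by apply: (locks2_ext ij); rewrite ?lupd_at ?lupd_other.
          exists (lupd Ca i false); rewrite EL; split => //; split; first by rewrite lupd_at.
          by left; rewrite lupd_other.
        - have Ej : lupd full2 i false j = true by rewrite lupd_other.
          have EL : lupd (lupd full2 i false) j false = L.
            by apply: (locks2_ext ij); [rewrite lupd_other // lupd_at HLi|rewrite lupd_at HLj].
          case: (srun_mono Hf Ej) => [H|[_ H]]; rewrite EL in H.
          + exists (lupd Ca i false); split; first exact: H.
            by split; [rewrite lupd_at|left; rewrite lupd_other].
          + exists (lupd (lupd Ca i false) j false); split; first exact: H.
            by split; [rewrite lupd_other // lupd_at|right; rewrite lupd_at].
      apply: srun_trans (srun_app (LP i :: x ++ [::]) HaD) _.
      apply: srun_P => //.
      apply: (srun_app [::] (xfact_ext ij HxM Cai HMj _ _)); first by rewrite lupd_at.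
      by rewrite lupd_other.
    have phaseB : forall u' v, (forall cA cB eA eB, reachP (init cA cB eA eB) [:: (LP i :: u' ++ cA, eA); (v ++ cB, eB)] full2) ->
       exists v' N, srun v full2 (LP j :: v') N /\ N i = false /\ N j = true /\
        forall cA cB eA eB, reachP (init cA cB eA eB) [:: (u' ++ cA, eA); (LP j :: v' ++ cB, eB)] full2.
      move=> u' v HW.
      case: (srun_outcome v full2) => [[L5 HvL5]|[k [v' [N [HvN HNk]]]]].
      - exfalso.
        have R5 : forall cA cB eA eB, reachP (init cA cB eA eB) [:: (LP i :: u' ++ cA, eA); (cB, eB)] L5.
          by move=> cA cB eA eB; apply: (reachP_srun2 (HW cA cB eA eB) (srun_app cB HvL5)).
        case HL5i: (L5 i).
        + apply: (dead_contra H1 (R5 [::] [::] LTick LZero)).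
          * by apply: blocked2; [exact: blockedP|exact: blockedN].
          * by apply: notin2 => E; inversion E.
        + have R := reachP_srun2 (R5 [::] (U1 ++ [::]) LTick LZero) (steal L5 HL5i).
          apply: (dead_contra H4 R).
          * by apply: blocked2; apply: blockedP.
          * by apply: notin2 => E; inversion E.
      - case HNi: (N i).
        + exfalso.
          apply: (dead_contra H1 (reachP_srun2 (HW [::] [::] LTick LZero) (srun_app [::] HvN))).
          * by apply: blocked2; apply: blockedP.
          * by apply: notin2 => E; inversion E.
        + have Ekj : k = j.
            by case: (ord2_cases k ij) => // Eki; move: HNk; rewrite Eki HNi.
          subst k.
          exists v', N; split => //; split => //; split => //.
          move=> cA cB eA eB.
          have R := reachP_srun2 (HW cA cB eA eB) (srun_app cB HvN).
          have HA : srun (LP i :: u' ++ cA) N (u' ++ cA) full2.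
            apply: srun_P => //.
            have -> : lupd N i true = full2 by apply: (locks2_ext ij); rewrite ?lupd_at ?lupd_other.
            exact: srun_refl.
          exact: (reachP_srun R HA).
    have W0 : forall cA cB eA eB, reachP (init cA cB eA eB) [:: (LP i :: x' ++ cA, eA); (y ++ cB, eB)] full2.
      move=> cA cB eA eB.
      have R := reachP_srun (canon cA cB eA eB) (srun_app cA HxM).
      have HB : srun (LP j :: y ++ cB) M (y ++ cB) full2.
        by apply: srun_P => //; rewrite HMfull; apply: srun_refl.
      exact: (reachP_srun2 R HB).
    have [y' [N [HyN [HNi [HNj Z1]]]]] := phaseB x' y W0.
    have YF : srun y (lupd full2 i false) (LP j :: y') N.
      have F2i : full2 i = true by [].
      by case: (srun_mono HyN F2i) => [//|[]]; rewrite HNi.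
    have round : forall n u v, (size u < n)%N ->
      (forall cA cB eA eB, reachP (init cA cB eA eB) [:: (u ++ cA, eA); (LP j :: v ++ cB, eB)] full2) -> False.
      elim=> [//|n IH] u v Hn HR.
      case: (srun_outcome u full2) => [[L3 HuL3]|[k [u' [M' [HuM HMk']]]]].
      * have R1 : forall cA cB eA eB, reachP (init cA cB eA eB) [:: (cA, eA); (LP j :: v ++ cB, eB)] L3.
          by move=> cA cB eA eB; apply: (reachP_srun (HR cA cB eA eB) (srun_app cA HuL3)).
        case: (srun_outcome (LP j :: v) L3) => [[L4 HvL4]|[k [v' [N' [HvN HNk]]]]].
        - have [L3j _] := srun_LP_inv HvL4.
          have R := R1 (U2 ++ [::]) (U1 ++ [::]) LTick LZero.
          have HA : srun (U2 ++ [::]) L3 (LP j :: y' ++ [::]) N.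
            rewrite /U2 -catA; apply: srun_trans (srun_app (LP j :: y ++ [::]) (b_any L3)) _.
            apply: srun_P; first by rewrite lupd_other.
            have -> : lupd (lupd L3 i false) j true = lupd full2 i false.
              by apply: (locks2_ext ij); [rewrite lupd_other // !lupd_at|rewrite lupd_at lupd_other].
            exact: (srun_app [::] YF).
          apply: (dead_contra H5 (reachP_srun R HA)).
          + by apply: blocked2; apply: blockedP.
          + by apply: notin2 => E; inversion E.
        - apply: (dead_contra H2 (reachP_srun2 (R1 [::] [::] LZero LTick) (srun_app [::] HvN))).
          + by apply: blocked2; [exact: blockedN|exact: blockedP].
          + by apply: notin2 => E; inversion E.
      * case HMj': (M' j).
        - apply: (dead_contra H1 (reachP_srun (HR [::] [::] LTick LZero) (srun_app [::] HuM))).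
          + by apply: blocked2; apply: blockedP.
          + by apply: notin2 => E; inversion E.
        - have Eki : k = i.
            by case: (ord2_cases k ij) => // Ekj; move: HMk'; rewrite Ekj HMj'.
          subst k.
          have W : forall cA cB eA eB, reachP (init cA cB eA eB) [:: (LP i :: u' ++ cA, eA); (v ++ cB, eB)] full2.
            move=> cA cB eA eB.
            have R := reachP_srun (HR cA cB eA eB) (srun_app cA HuM).
            have HB : srun (LP j :: v ++ cB) M' (v ++ cB) full2.
              apply: srun_P => //.
              have -> : lupd M' j true = full2 by apply: (locks2_ext ij); rewrite ?lupd_at ?lupd_other.
              exact: srun_refl.
            exact: (reachP_srun2 R HB).
          have [v' [N' [_ [_ [_ Z]]]]] := phaseB u' v W.
          apply: (IH u' v' _ Z).
          have := srun_len HuM; rewrite /= => Hl.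
          by apply: leq_trans Hl _; rewrite -ltnS.
    exact: (round (size x').+1 x' y' (ltnSn _) Z1).
Qed.


Definition sync2 (u v : ssub) : option (ssub * ssub) :=
  match u, v with
  | SBang a, SQuest b => Some (a, b)
  | SQuest b, SBang a => Some (a, b)
  | _, _ => None
  end.

Lemma sstep2 u v q : sstep [:: u; v] q -> exists a b, sync2 u v = Some (a, b) /\ q = [:: a; b].
Proof.
move=> [u1 [u2 [r [Hp ->]]]].
have Hl := Permutation_length Hp.
case: r Hp Hl => [|? ?] Hp Hl; last by [].
case: (Permutation_length_2_inv Hp) => [[<- <-]|[<- <-]]; by exists u1, u2.
Qed.

Lemma sstep_sync u v a b : sync2 u v = Some (a, b) -> sstep [:: u; v] [:: a; b].
Proof.
case: u => [| |u'|u']; case: v => [| |v'|v'] //= [<- <-].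
- exists u', v', [::]; split => //; exact: Permutation_refl.
- exists v', u', [::]; split => //; exact: perm_swap.
Qed.

Lemma sreach_inv (Inv : sproc -> Prop) : (forall x y, Inv x -> sstep x y -> Inv y) ->
  forall x y, sreach x y -> Inv x -> Inv y.
Proof. move=> HI x y; elim => [? ? Hs|? //|? ? ? _ IH1 _ IH2] Hx; [exact: HI Hx Hs|exact: IH2 (IH1 Hx)]. Qed.

Lemma must_of (p : sproc) (S : list sproc) : In p S ->
  (forall x y, In x S -> sstep x y -> In y S) -> (forall x, In x S -> smay x) -> smust p.
Proof. move=> Hp Hc Hm q Hq; apply: Hm; exact: (sreach_inv (Inv := fun x => In x S) Hc Hq Hp). Qed.

Lemma nonmay_of (p : sproc) (S : list sproc) : In p S ->
  (forall x y, In x S -> sstep x y -> In y S) -> (forall x, In x S -> ~ In STick x) -> ~ smay p.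
Proof. move=> Hp Hc Hm [q [Hq Hs]]; exact: (Hm _ (sreach_inv (Inv := fun x => In x S) Hc Hq Hp) Hs). Qed.

Lemma smay_now p : In STick p -> smay p.
Proof. by move=> H; exists p; split => //; apply: rt_refl. Qed.

Lemma smay_sync u v a b : sync2 u v = Some (a, b) -> smay [:: a; b] -> smay [:: u; v].
Proof.
move=> E [q [Hq Hs]]; exists q; split => //.
apply: rt_trans Hq; apply: rt_step; exact: sstep_sync E.
Qed.

Ltac inS := repeat (first [left; reflexivity | right]).
Lemma sstep2' x q : sstep x q -> forall u v, x = [:: u; v] ->
  exists a b, sync2 u v = Some (a, b) /\ q = [:: a; b].
Proof. by move=> Hs u v Ex; subst x; apply: sstep2. Qed.

Ltac closure :=
  let x := fresh "x" in let y := fresh "y" in let Hs := fresh "Hs" in let Hx := fresh "Hx" in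
  move=> x y Hx Hs; repeat (case: Hx => [Hx|Hx]; [subst x;
    let a := fresh "a" in let b := fresh "b" in let E := fresh "E" in
    have [a [b [E ->]]] := sstep2 Hs; move: E => /= E;
    first [discriminate | (case: E => <- <-; inS)] | ]); try (case: Hx).

Ltac mays :=
  let x := fresh "x" in let Hx := fresh "Hx" in move=> x Hx;
  repeat (case: Hx => [Hx|Hx]; [subst x;
     repeat (first [solve [apply: smay_now; inS] | apply: smay_sync; [reflexivity|]]) | ]); try (case: Hx).

Ltac nonsucc :=
  let x := fresh "x" in let Hx := fresh "Hx" in move=> x Hx;
  repeat (case: Hx => [Hx|Hx]; [subst x; move=> /= H; intuition discriminate | ]); try (case: Hx).


Lemma N1 : smust [:: SBang STick; SQuest SZero].
Proof. apply: (must_of (S := [:: [:: SBang STick; SQuest SZero]; [:: STick; SZero]])); [inS|closure|mays]. Qed.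
Lemma N2 : smust [:: SBang SZero; SQuest STick].
Proof. apply: (must_of (S := [:: [:: SBang SZero; SQuest STick]; [:: SZero; STick]])); [inS|closure|mays]. Qed.
Lemma N3 : ~ smay [:: SBang (SQuest STick); SQuest SZero].
Proof. apply: (nonmay_of (S := [:: [:: SBang (SQuest STick); SQuest SZero]; [:: SQuest STick; SZero]])); [inS|closure|nonsucc]. Qed.
Lemma N4 : smust [:: SBang STick; SQuest (SBang SZero)].
Proof. apply: (must_of (S := [:: [:: SBang STick; SQuest (SBang SZero)]; [:: STick; SBang SZero]])); [inS|closure|mays]. Qed.
Lemma N5 : smust [:: SBang (SQuest STick); SQuest (SBang SZero)].
Proof. apply: (must_of (S := [:: [:: SBang (SQuest STick); SQuest (SBang SZero)]; [:: SQuest STick; SBang SZero]; [:: SZero; STick]])); [inS|closure|mays]. Qed.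
Lemma M1 : smust [:: SQuest STick; SBang SZero].
Proof. apply: (must_of (S := [:: [:: SQuest STick; SBang SZero]; [:: SZero; STick]])); [inS|closure|mays]. Qed.
Lemma M2 : smust [:: SQuest SZero; SBang STick].
Proof. apply: (must_of (S := [:: [:: SQuest SZero; SBang STick]; [:: STick; SZero]])); [inS|closure|mays]. Qed.
Lemma M3 : ~ smay [:: SQuest (SBang STick); SBang SZero].
Proof. apply: (nonmay_of (S := [:: [:: SQuest (SBang STick); SBang SZero]; [:: SZero; SBang STick]])); [inS|closure|nonsucc]. Qed.
Lemma M4 : smust [:: SQuest STick; SBang (SQuest SZero)].
Proof. apply: (must_of (S := [:: [:: SQuest STick; SBang (SQuest SZero)]; [:: SQuest SZero; STick]])); [inS|closure|mays]. Qed.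
Lemma M5 : smust [:: SQuest (SBang STick); SBang (SQuest SZero)].
Proof. apply: (must_of (S := [:: [:: SQuest (SBang STick); SBang (SQuest SZero)]; [:: SQuest SZero; SBang STick]; [:: STick; SZero]])); [inS|closure|mays]. Qed.


Lemma stuck_srun S C pre : stuck_prefix S C = Some pre ->
  exists k rest C', S = pre ++ LP k :: rest /\ srun pre C [::] C' /\ C' k = true.
Proof.
elim: S C pre => [//|[i|i] S IH] C pre /=.
- case HC: (C i) => /=.
  + move=> [<-].
    by exists i, S, C; split => //; split => //; apply: srun_refl.
  + case E: (stuck_prefix S (lupd C i true)) => [pre'|//] /= [<-].
    have [k [rest [C' [-> [H1 H2]]]]] := IH _ _ E.
    by exists k, rest, C'; split => //; split => //; apply: srun_P.
- case E: (stuck_prefix S (lupd C i false)) => [pre'|//] /= [<-].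
  have [k [rest [C' [-> [H1 H2]]]]] := IH _ _ E.
  by exists k, rest, C'; split => //; split => //; apply: srun_T.
Qed.

Lemma cat_inv_head (T : Type) (l s1 s2 : seq T) : l ++ s1 = l ++ s2 -> s1 = s2.
Proof. by elim: l => //= x l IH [] /IH. Qed.

Lemma blocking_info (IS : locks 2) w i : blocking_type_P IS w i ->
  exists pre post C, w = pre ++ LP i :: post /\ (forall s, In s pre -> lsym_idx s <> i) /\
    srun pre IS [::] C /\ C i = true /\ IS i = true.
Proof.
move=> [pre [post [Hs [Ew Hn]]]].
have [k [rest [C [Ew' [Hr Hk]]]]] := stuck_srun Hs.
move: Ew'; rewrite Ew => /cat_inv_head [Eki _]; subst k.
exists pre, post, C; split => //; split => //; split => //; split => //.
by rewrite -(srun_keep Hr Hn).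
Qed.

Lemma l12 : lock1 != lock2. Proof. by []. Qed.

Unset Implicit Arguments.

Theorem proposition5p16 (IS : locks 2) (wb wq : list (lsym 2)) :
  blocking_type_P IS wb lock1 ->
  blocking_type_P IS wq lock2 ->
  ~ correct_translation IS wb wq.
Proof.
move=> Hb Hq Hc.
have [pb [xb [Cb' [Ewb [Hnb [Hrb [Cb1 IS1]]]]]]] := blocking_info Hb.
have [pq [yq [Cq [Ewq [Hnq [Hrq [Cq2 IS2]]]]]]] := blocking_info Hq.
have EIS : IS = full2 by apply: (locks2_ext l12).
subst IS.
have must p : smust p -> lmust_state (tau wb wq p, full2) by move=> Hm; apply: (proj1 (proj2 (Hc p))).
have nmay p : ~ smay p -> ~ lmay_state (tau wb wq p, full2) by move=> Hm Hl; apply: Hm; apply: (proj2 (proj1 (Hc p))).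
have F1 := must _ N1. have F2 := must _ N2. have F3 := nmay _ N3. have F4 := must _ N4. have F5 := must _ N5.
have G1 := must _ M1. have G2 := must _ M2. have G3 := nmay _ M3. have G4 := must _ M4. have G5 := must _ M5.
rewrite /tau /= Ewb Ewq in F1 F2 F3 F4 F5 G1 G2 G3 G4 G5.
case Hq1: (Cq lock1).
- case Hb2: (Cb' lock2).
  + (* both prefixes leave both locks full: immediate deadlock *)
    have Cqf : Cq = full2 by apply: (locks2_ext l12) => //; rewrite (srun_keep Hrq Hnq).
    have Cbf : Cb' = full2 by apply: (locks2_ext l12).
    subst Cq Cb'.
    have R0 := reachP_refl [:: ((pb ++ LP lock1 :: xb) ++ [::], LTick); ((pq ++ LP lock2 :: yq) ++ [::], LZero)] full2.
    have HB : srun ((pq ++ LP lock2 :: yq) ++ [::]) full2 (LP lock2 :: yq ++ [::]) full2.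
      by rewrite -catA; apply: (srun_app (LP lock2 :: yq ++ [::]) Hrq).
    have HA : srun ((pb ++ LP lock1 :: xb) ++ [::]) full2 (LP lock1 :: xb ++ [::]) full2.
      by rewrite -catA; apply: (srun_app (LP lock1 :: xb ++ [::]) Hrb).
    apply: (dead_contra F1 (reachP_srun (reachP_srun2 R0 HB) HA)).
    * by apply: blocked2; apply: blockedP.
    * by apply: notin2 => E; inversion E.
  + exact: (generic (i := lock2) (j := lock1) (a := pq) (x := yq) (b := pb) (y := xb)
             (Ca := Cq) (Cb := Cb') (negbT (negbTE (l12)) : lock2 != lock1) Hnq Hnb Hrq Hrb Hb2 G1 G2 G3 G4 G5).
- exact: (generic (i := lock1) (j := lock2) (a := pb) (x := xb) (b := pq) (y := yq)
             (Ca := Cb') (Cb := Cq) l12 Hnb Hnq Hrb Hrq Hq1 F1 F2 F3 F4 F5).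
Qed.
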